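(* Let $G$ be a graph and let $G_1,\dots,G_k$ be subgraphs of $G$ such that (i) the edge sets $E(G_1),\dots,E(G_k)$ are mutually disjoint; (ii) for each $i$, every maximal clique of $G_i$ is also a maximal clique of $G$; (iii) for each $i$, any maximal clique of $G$ belonging to $G_i$ and any maximal clique of $G$ not belonging to $G_i$ share at most one vertex. Then $p(G) \ge \sum_{i=1}^k p(G_i)$.
   Context: All graphs are finite and simple. For an acyclic digraph $D$, the phylogeny graph $P(D)$ is the graph on $V(D)$ in which distinct vertices $u,v$ are adjacent if and only if $(u,v)\in A(D)$, or $(v,u)\in A(D)$, or there is a vertex $w$ with $(u,w),(v,w)\in A(D)$. A phylogeny digraph for a graph $G$ is an acyclic digraph $D$ such that $G$ is an induced subgraph of $P(D)$ and $D$ has no arc from a vertex of $V(D)\setminus V(G)$ to a vertex of $V(G)$. The phylogeny number $p(G)$ is the minimum of $|V(D)\setminus V(G)|$ over all phylogeny digraphs $D$ for $G$. A clique of $G$ ''belongs to $G_i$'' if it is a clique of $G_i$. *)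

(* Defs.v *)
From mathcomp Require Import all_boot.
Set Implicit Arguments. Unset Strict Implicit. Unset Printing Implicit Defensive.

Definition is_graph (V : finType) (S : {set V}) (e : rel V) : Prop :=
  (forall u v, e u v -> (u \in S) && (v \in S)) /\
  (forall u, ~~ e u u) /\
  (forall u v, e u v = e v u).

Definition is_subgraph (V : finType) (S' : {set V}) (e' : rel V)
    (S : {set V}) (e : rel V) : Prop :=
  is_graph S' e' /\ S' \subset S /\ (forall u v, e' u v -> e u v).

Definition clique (V : finType) (S : {set V}) (e : rel V) (K : {set V}) : Prop :=
  K != set0 /\ K \subset S /\ (forall u v, u \in K -> v \in K -> u != v -> e u v).

Definition maximal_clique (V : finType) (S : {set V}) (e : rel V) (K : {set V}) : Prop :=
  clique S e K /\ (forall K', clique S e K' -> K \subset K' -> K' = K).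

Definition phylo_adj (T : finType) (a : rel T) (x y : T) : bool :=
  [|| a x y, a y x | [exists w, a x w && a y w]].

Definition acyclic (T : finType) (a : rel T) : Prop :=
  forall x y, a x y -> ~~ connect a y x.

(* D (arc relation a on V + 'I_n; its vertex set is inl @: S together with
   the n new vertices inr j) is a phylogeny digraph for the graph (S, e). *)
Definition is_phylogeny_digraph (V : finType) (S : {set V}) (e : rel V) (n : nat)
    (a : rel (V + 'I_n)) : Prop :=
  (forall x y, a x y ->
     match x with inl u => u \in S | inr _ => true end /\
     match y with inl v => v \in S | inr _ => true end) /\
  acyclic a /\
  (forall (j : 'I_n) (v : V), ~~ a (inr j) (inl v)) /\
  (forall u v, u \in S -> v \in S -> u != v -> e u v = phylo_adj a (inl u) (inl v)).

Definition phylo_admits (V : finType) (S : {set V}) (e : rel V) (n : nat) : Prop :=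
  exists a : rel (V + 'I_n), is_phylogeny_digraph S e a.

Definition is_phylogeny_number (V : finType) (S : {set V}) (e : rel V) (m : nat) : Prop :=
  phylo_admits S e m /\ (forall n, phylo_admits S e n -> m <= n).

(* Main.v *)
Require Import Defs.
From mathcomp Require Import all_boot.
Set Implicit Arguments. Unset Strict Implicit. Unset Printing Implicit Defensive.

Definition cliqueb (V:finType) (S:{set V}) (e:rel V) (K:{set V}) : bool :=
 [&& K != set0, K \subset S & [forall u, forall v, [&& u \in K, v \in K & u != v] ==> e u v]].

Lemma cliqueP (V:finType) (S:{set V}) (e:rel V) K : reflect (clique S e K) (cliqueb S e K).
Proof.
apply: (iffP and3P) => [[H1 H2 /forallP H3]|[H1 [H2 H3]]]; do ?split => //.
  by move=> u v Hu Hv Huv; have /forallP/(_ v) := H3 u; rewrite Hu Hv Huv.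
by apply/forallP => u; apply/forallP => v; apply/implyP => /and3P[? ? ?]; apply: H3.
Qed.

Lemma maxset_clique (V:finType) (S:{set V}) (e:rel V) K :
  maxset (cliqueb S e) K -> maximal_clique S e K.
Proof.
move/maxsetP => [/cliqueP H1 H2]; split => // K' /cliqueP; exact: H2.
Qed.

Lemma reindex (V : finType) (S : {set V}) (e : rel V) n (b : rel (V + 'I_n)) (Z : {set 'I_n}) :
  is_phylogeny_digraph S e b ->
  (forall j y, b (inr j) y = false) ->
  (forall x j, b x (inr j) -> j \in Z) ->
  phylo_admits S e #|Z|.
Proof.
move=> [H1 [H2 [H3 H4]]] Hout Hin.
pose f (x : V + 'I_#|Z|) : V + 'I_n := match x with inl v => inl v | inr j => inr (enum_val j) end.
exists (fun x y => b (f x) (f y)); split; [|split; [|split]].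
- move=> [u|j] [v|j'] /H1 //=.
- move=> x y bxy; apply/negP => /connectP [p pp lp].
  have := H2 _ _ bxy; move/negP; apply; apply/connectP; exists (map f p).
    by apply: (homo_path (e := fun x y => b (f x) (f y))).
  by rewrite last_map -lp.
- by move=> j v /=; rewrite Hout.
- move=> u v Hu Hv Huv; rewrite H4 //; rewrite /phylo_adj /=; congr [|| _, _ | _].
  apply/existsP/existsP => [[[w|j] /andP[Hw1 Hw2]]|[w Hw]].
  + by exists (inl w); rewrite Hw1 Hw2.
  + have Hj := Hin _ _ Hw1; exists (inr (enum_rank_in Hj j)) => /=.
    by rewrite enum_rankK_in // Hw1 Hw2.
  + by exists (f w).
Qed.

Lemma sum_disj n k (Z : 'I_k -> {set 'I_n}) :
  (forall i i' j, i != i' -> j \in Z i -> j \in Z i' -> False) ->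
  \sum_(i < k) #|Z i| <= n.
Proof.
move=> Hd.
have -> : \sum_(i < k) #|Z i| = \sum_(i < k) \sum_(j < n) (j \in Z i).
  by apply: eq_bigr => i _; rewrite -sum1_card big_mkcond /=; apply: eq_bigr => j _; case: (j \in Z i).
rewrite exchange_big /=.
rewrite -[n in _ <= n]card_ord -sum1_card.
apply: leq_sum => j _.
case: (pickP (fun i => j \in Z i)) => [i0 Hi0|H0].
  rewrite (bigD1 i0) //= Hi0 big1 // => i Hi; apply/eqP; rewrite eqb0; apply/negP => Hji.
  by apply: (Hd i i0 j).
by rewrite big1 // => i _; rewrite H0.
Qed.
Lemma keyL (V:finType) (e : rel V) (S' : {set V}) (E' : rel V) (C : {set V}) :
  is_graph setT e -> is_subgraph S' E' setT e ->
  (forall K, maximal_clique S' E' K -> maximal_clique setT e K) ->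
  (forall K K', maximal_clique setT e K -> clique S' E' K ->
      maximal_clique setT e K' -> ~ clique S' E' K' -> #|K :&: K'| <= 1) ->
  (forall x x', x \in C -> x' \in C -> x != x' -> e x x') ->
  forall u v, u \in C -> v \in C -> E' u v ->
  forall x x', x \in C -> x' \in C -> x != x' -> E' x x'.
Proof.
move=> [Ge1 [Ge2 Ge3]] [[Gi1 [Gi2 Gi3]] _] Hii Hiii HC u v Hu Hv Euv.
have uv : u != v by apply/eqP => Heq; move: Euv; rewrite Heq (negbTE (Gi2 v)).
have /andP[uS vS] := Gi1 _ _ Euv.
have CcG : cliqueb setT e C.
  apply/cliqueP; split; [by apply/set0Pn; exists u|split; [exact: subsetT|exact: HC]].
have [K' /maxset_clique K'max CK'] := maxset_exists CcG.
have uvc : cliqueb S' E' [set u; v].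
  apply/cliqueP; split; [by apply/set0Pn; exists u; rewrite !inE eqxx|split].
    by apply/subsetP => z; rewrite !inE => /orP[] /eqP ->.
  move=> x y; rewrite !inE => /orP[] /eqP -> /orP[] /eqP -> //; rewrite ?eqxx //.
  by rewrite Gi3.
have [K /maxset_clique Kmax uvK] := maxset_exists uvc.
case: (boolP (cliqueb S' E' K')) => [/cliqueP [_ [_ HK']]|HK'].
  move=> x x' Hx Hx' Hxx'; apply: HK' => //; exact: (subsetP CK').
exfalso.
have := Hiii K K' (Hii _ Kmax) (proj1 Kmax) K'max (fun H => negP HK' (introT (cliqueP _ _ _) H)).
apply/negP; rewrite -ltnNge.
have <- : #|[set u; v]| = 2 by rewrite cards2 uv.
apply: subset_leq_card; apply/subsetP => z Hz; rewrite inE; apply/andP; split.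
  exact: (subsetP uvK).
by apply: (subsetP CK'); move: Hz; rewrite !inE => /orP[] /eqP ->.
Qed.
Theorem mainTheorem2 (V : finType) (e : rel V) (k : nat)
    (S : 'I_k -> {set V}) (E : 'I_k -> rel V) (pG : nat) (p : 'I_k -> nat) :
  is_graph [set: V] e ->
  (forall i, is_subgraph (S i) (E i) [set: V] e) ->
  (forall i j, i != j -> forall u v, ~~ (E i u v && E j u v)) ->
  (forall i K, maximal_clique (S i) (E i) K -> maximal_clique [set: V] e K) ->
  (forall i K K', maximal_clique [set: V] e K -> clique (S i) (E i) K ->
      maximal_clique [set: V] e K' -> ~ clique (S i) (E i) K' ->
      #|K :&: K'| <= 1) ->
  is_phylogeny_number [set: V] e pG ->
  (forall i, is_phylogeny_number (S i) (E i) (p i)) ->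
  \sum_(i < k) p i <= pG.
Proof.
move=> HG Hsub Hdisj Hii Hiii [[a [Ha1 [Ha2 [Ha3 Ha4]]]] _] Hp.
pose c (y : V + 'I_pG) (u : V) := a (inl u) y || (y == inl u).
have Cc : forall y x x', c y x -> c y x' -> x != x' -> e x x'.
  move=> y x x' Hx Hx' Hxx'; rewrite Ha4 ?inE //; rewrite /phylo_adj.
  move: Hx Hx'; rewrite /c => /orP[Hx|/eqP Hx] /orP[Hx'|/eqP Hx'].
  - by apply/orP; right; apply/orP; right; apply/existsP; exists y; rewrite Hx Hx'.
  - by subst y; rewrite Hx.
  - by subst y; rewrite Hx' orbT.
  - by move: Hxx'; rewrite Hx in Hx'; case: Hx' => ->; rewrite eqxx.
pose mark i y := [exists u, exists v, [&& c y u, c y v & E i u v]].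
have L : forall i y x x', mark i y -> c y x -> c y x' -> x != x' -> E i x x'.
  move=> i y x x' /existsP[u /existsP[v /and3P[Hu Hv Huv]]] Hx Hx' Hxx'.
  apply: (@keyL V e (S i) (E i) [set z | c y z] HG (Hsub i) (Hii i) (Hiii i) _ u v);
    rewrite ?inE //.
  by move=> z z'; rewrite !inE; apply: Cc.
have LS : forall i y x, mark i y -> c y x -> x \in S i.
  move=> i y x Hm Hx; have [[Gi1 [Gi2 Gi3]] _] := Hsub i.
  move: (Hm) => /existsP[u /existsP[v /and3P[Hu Hv Huv]]].
  have uv : u != v by apply/eqP => Heq; move: Huv; rewrite Heq (negbTE (Gi2 v)).
  case: (eqVneq x u) => [->|xu]; first by case/andP: (Gi1 _ _ Huv).
  by case/andP: (Gi1 _ _ (L i y x u Hm Hx Hu xu)).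
have Hb : forall i, phylo_admits (S i) (E i) #|[set j | mark i (inr j)]|.
  move=> i; have [[Gi1 [Gi2 Gi3]] [_ Gi4]] := Hsub i.
  pose b (x y : V + 'I_pG) := if x is inl _ then a x y && mark i y else false.
  apply: (@reindex V (S i) (E i) pG b); last 2 first.
  - by [].
  - by move=> [x|x] j //= /andP[_ Hm]; rewrite inE.
  split; [|split; [|split]].
  - move=> [x|x] y //= /andP[Hxy Hm]; split.
      by apply: (LS i y) => //; rewrite /c Hxy.
    by case: y Hxy Hm => // y Hxy Hm; apply: (LS i (inl y)) => //; rewrite /c eqxx orbT.
  - move=> x y bxy; apply: contra (Ha2 _ _ (_ : a x y)).
      apply: connect_sub => z z' Hz; apply: connect1.
      by case: z Hz => // z /andP[].
    by case: x bxy => // x /andP[].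
  - by [].
  - move=> u v Hu Hv Huv; rewrite /phylo_adj /=.
    have cself : forall w, c (inl w) w by move=> w; rewrite /c eqxx orbT.
    apply/idP/idP => [Euv|].
      have : phylo_adj a (inl u) (inl v) by rewrite -Ha4 ?inE //; exact: Gi4.
      rewrite /phylo_adj => /or3P[H|H|/existsP[w /andP[Hw1 Hw2]]].
      + apply/orP; left; rewrite H /=; apply/existsP; exists u; apply/existsP; exists v.
    by rewrite /c H eqxx orbT Euv.
      + apply/orP; right; apply/orP; left; rewrite H /=; apply/existsP; exists u.
        by apply/existsP; exists v; rewrite /c H eqxx orbT Euv.
      + apply/orP; right; apply/orP; right; apply/existsP; exists w.
        have Hm : mark i w by apply/existsP; exists u; apply/existsP; exists v; rewrite /c Hw1 Hw2 Euv.
        by rewrite Hw1 Hw2 Hm.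
    move=> /or3P[/andP[H Hm]|/andP[H Hm]|/existsP[w /andP[/andP[Hw1 Hm] /andP[Hw2 _]]]].
    + by apply: (L i (inl v)) => //; rewrite /c H.
    + by apply: (L i (inl u)) => //; rewrite /c ?H // eq_sym.
    + by apply: (L i w) => //; rewrite /c ?Hw1 ?Hw2.
apply: (@leq_trans (\sum_(i < k) #|[set j | mark i (inr j)]|)).
  by apply: leq_sum => i _; apply: (proj2 (Hp i)).
apply: sum_disj => i i' j ii'; rewrite !inE => Hm Hm'.
move: (Hm) => /existsP[u /existsP[v /and3P[Hu Hv Huv]]].
have [[Gi1 [Gi2 Gi3]] _] := Hsub i.
have uv : u != v by apply/eqP => Heq; move: Huv; rewrite Heq (negbTE (Gi2 v)).
have := Hdisj i i' ii' u v; rewrite Huv /=.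
by rewrite (L i' (inr j) u v Hm' Hu Hv uv).
Qed.
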